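(* Let $p \geqslant 3$ be a prime, $d \geqslant 2$, and $V$ a $d$-dimensional vector space over $\mathbb{F}_p$. Let $G = \mathrm{Sym}(V)$ and $H = \mathrm{AGL}(V)$. Let $W$ be a proper non-trivial subspace of $V$ and let $K < \mathrm{GL}(V)$ be the setwise stabiliser of $W$ in $\mathrm{GL}(V)$. Then there exists $x \in G$ such that $H \cap H^x = K$.
   Context: $\mathrm{AGL}(V)$ is the group of invertible affine transformations $\mathbf{v} \mapsto \mathbf{v}g + \mathbf{u}$ ($g \in \mathrm{GL}(V)$, $\mathbf{u} \in V$) of $V$, regarded as a subgroup of $\mathrm{Sym}(V)$; $\mathrm{GL}(V)$ is the subgroup of linear maps. *)

(* Defs.v *)
From HB Require Import structures.
From mathcomp Require Import all_boot all_order all_algebra all_fingroup.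
Set Implicit Arguments. Unset Strict Implicit. Unset Printing Implicit Defensive.
Import GRing.Theory.
Local Open Scope ring_scope.

(* V = 'rV['F_p]_d  (row vectors, maps act on the right: v |-> v *m g + u). *)

Definition AGL (p d : nat) : {set {perm 'rV['F_p]_d}} :=
  [set s : {perm 'rV['F_p]_d} |
     [exists g : 'M['F_p]_d, [exists u : 'rV['F_p]_d,
        (g \in unitmx) && [forall v : 'rV['F_p]_d, s v == v *m g + u]]]].

Definition subspace_set (p d : nat) (W : 'M['F_p]_d) : {set 'rV['F_p]_d} :=
  [set v : 'rV['F_p]_d | (v <= W)%MS].

Definition GL_stab (p d : nat) (W : 'M['F_p]_d) : {set {perm 'rV['F_p]_d}} :=
  [set s : {perm 'rV['F_p]_d} |
     [exists g : 'M['F_p]_d,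
        (g \in unitmx) && [forall v : 'rV['F_p]_d, s v == v *m g]]
     && ((fun v => s v) @: subspace_set W == subspace_set W)].

(* Main.v *)
Require Import Defs.
From mathcomp Require Import all_boot all_order all_algebra all_fingroup.
Set Implicit Arguments. Unset Strict Implicit. Unset Printing Implicit Defensive.
Import GRing.Theory.
Local Open Scope ring_scope.

Definition xf (F : fieldType) (n : nat) (W : 'M[F]_n) (v : 'rV[F]_n) :=
  if (v <= W)%MS then - v else v.

Lemma subN (F : fieldType) (n : nat) (W : 'M[F]_n) (v : 'rV[F]_n) :
  (- v <= W)%MS = (v <= W)%MS.
Proof. by rewrite (eqmx_opp v). Qed.

Lemma xfK (F : fieldType) (n : nat) (W : 'M[F]_n) : involutive (xf W).
Proof. by move=> v; rewrite /xf; case h: (v <= W)%MS; rewrite ?subN h ?opprK. Qed.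

Lemma xf_sub (F : fieldType) (n : nat) (W : 'M[F]_n) (v : 'rV[F]_n) :
  (xf W v - v <= W)%MS.
Proof.
rewrite /xf; case: ifP => h; last by rewrite subrr sub0mx.
by rewrite addmx_sub // subN.
Qed.

Lemma subBr (F : fieldType) (n : nat) (W : 'M[F]_n) (a b : 'rV[F]_n) :
  (a - b <= W)%MS -> (b <= W)%MS -> (a <= W)%MS.
Proof. by move=> h1 h2; rewrite -(subrK b a) addmx_sub. Qed.

Lemma inv_pres (F : fieldType) (n : nat) (W : 'M[F]_n) (A : 'M[F]_n) :
  A \in unitmx -> (forall w : 'rV_n, (w <= W)%MS -> (w *m A <= W)%MS) ->
  forall u : 'rV_n, (u *m A <= W)%MS -> (u <= W)%MS.
Proof.
move=> uA hW u hu.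
have sWA : (W *m A <= W)%MS.
  by apply/row_subP => i; rewrite row_mul hW // row_sub.
have : (W *m A == W)%MS.
  by rewrite -(mxrank_leqif_eq sWA) mxrankMfree // row_free_unit.
move/eqmxP => e.
have : (u *m A <= W *m A)%MS by rewrite e.
by move/(submxMr (invmx A)); rewrite !mulmxK.
Qed.

Lemma half_sub (F : fieldType) (n : nat) (W : 'M[F]_n) (v : 'rV[F]_n) :
  (2%:R != 0 :> F) -> (v *+ 2 <= W)%MS -> (v <= W)%MS.
Proof.
move=> h2 hv; have -> : v = 2%:R^-1 *: (v *+ 2).
  by rewrite -scaler_nat scalerA mulVf // scale1r.
exact: scalemx_sub.
Qed.

Lemma half0 (F : fieldType) (n : nat) (v : 'rV[F]_n) :
  (2%:R != 0 :> F) -> v *+ 2 = 0 -> v = 0.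
Proof.
move=> h2 /eqP; rewrite -scaler_nat scaler_eq0 (negPf h2) /=; exact/eqP.
Qed.

Lemma zid1 (V : zmodType) (x y c b : V) : x - y = (x + c - (y + b)) - (c - b).
Proof. by rewrite opprD opprB !addrA subrK addrAC addrK. Qed.

Lemma addl (F : fieldType) (n : nat) (W : 'M[F]_n) (a b : 'rV[F]_n) :
  ((a + b)%R <= W)%MS -> (b <= W)%MS -> (a <= W)%MS.
Proof. by move=> h1 h2; rewrite -(addrK b a); apply: addmx_sub => //; rewrite subN. Qed.

Lemma addr_ (F : fieldType) (n : nat) (W : 'M[F]_n) (a b : 'rV[F]_n) :
  ((a + b)%R <= W)%MS -> (a <= W)%MS -> (b <= W)%MS.
Proof. by move=> h; rewrite addrC in h; move: h; apply: addl. Qed.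

Lemma key (F : fieldType) (n : nat) (W A B : 'M[F]_n) (b c : 'rV[F]_n) :
  (2%:R != 0 :> F) -> A \in unitmx ->
  (exists u : 'rV_n, ~~ (u <= W)%MS) ->
  (exists2 w : 'rV_n, (w <= W)%MS & w != 0) ->
  (forall v, xf W (xf W v *m A + b) = v *m B + c) ->
  b = 0 /\ (forall w : 'rV_n, (w <= W)%MS -> (w *m A <= W)%MS).
Proof.
move=> h2 uA [u0 hu0] [w0 hw0 nw0] hf.
have xin (v : 'rV_n) : (v <= W)%MS -> xf W v = - v by rewrite /xf => ->.
have xout (v : 'rV_n) : ~~ (v <= W)%MS -> xf W v = v by rewrite /xf => /negPf ->.
have hb : xf W b = c.
  by have := hf 0; rewrite /xf sub0mx oppr0 !mul0mx !add0r.
have s0 : (c - b <= W)%MS by rewrite -hb xf_sub.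
have s1 (v : 'rV_n) : ~~ (v <= W)%MS -> (v *m (B - A) <= W)%MS.
  move=> hv; have := xf_sub W (xf W v *m A + b); rewrite hf (xout v hv) => h.
  by rewrite mulmxBr (zid1 _ _ c b) addmx_sub // subN.
have s2 (v : 'rV_n) : (v *m (B - A) <= W)%MS.
  case hv: (v <= W)%MS; last by apply: s1; rewrite hv.
  have hu : ~~ ((u0 + v)%R <= W)%MS.
    by apply/negP => h; move/negP: hu0; apply; apply: (addl h); rewrite hv.
  have -> : v *m (B - A) = (u0 + v) *m (B - A) - u0 *m (B - A).
    by rewrite mulmxDl addrAC subrr add0r.
  by rewrite addmx_sub // ?subN s1.
have s3 (w : 'rV_n) : (w <= W)%MS -> (w *m (B + A)%R <= W)%MS.
  move=> hw; have := xf_sub W (xf W w *m A + b); rewrite hf (xin w hw) mulNmx => h.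
  by rewrite mulmxDr -[w *m A]opprK (zid1 _ _ c b) addmx_sub // subN.
have s4 (w : 'rV_n) : (w <= W)%MS -> (w *m A <= W)%MS.
  move=> hw; apply: (half_sub h2).
  have -> : w *m A *+ 2 = w *m (B + A) - w *m (B - A).
    by rewrite mulmxDr mulmxBr opprB addrC addrA subrK mulr2n.
  by rewrite addmx_sub // ?subN ?s3 ?s2.
split=> //.
case hbW: (b <= W)%MS.
  have hc : c = - b by rewrite -hb xin.
  have hinv := inv_pres uA s4.
  have hu (u : 'rV_n) : ~~ (u <= W)%MS -> u *m A + b = u *m B - b.
    move=> hu; have e := hf u; rewrite (xout u hu) (xout (u *m A + b)) in e.
      by rewrite e hc.
    apply/negP => h; move/negP: hu; apply; apply: hinv; exact: (addl h hbW).
  have hu2 : ~~ (u0 *+ 2 <= W)%MS.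
    by apply/negP => /(half_sub h2); apply/negP.
  have e1 := hu u0 hu0; have e2 := hu _ hu2; rewrite !mulr2n !mulmxDl in e2.
  rewrite -addrA e1 -(addrA (u0 *m B)) in e2.
  move/addIr: e2 => e4; rewrite e4 in e1; move/addrI: e1 => e5.
  by apply: half0 => //; rewrite mulr2n {1}e5 addNr.
have hbn : ~~ (b <= W)%MS by rewrite hbW.
have hc : c = b by rewrite -hb xout.
have hwB : w0 *m B = - (w0 *m A).
  have e := hf w0; rewrite (xin w0 hw0) mulNmx xout ?hc in e.
    by apply: (addIr b); rewrite -e.
  apply/negP => h; move/negP: hbn; apply; apply: (addr_ h).
  by rewrite subN s4.
pose u := b *m invmx A.
have huA : u *m A = b by rewrite /u mulmxKV.
have huW : ~~ (u <= W)%MS.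
  by apply/negP => h; move: (s4 u h); rewrite huA hbW.
have hbb : ~~ ((b + b)%R <= W)%MS.
  by apply/negP; rewrite -mulr2n => /(half_sub h2); apply/negP.
have e1 := hf u; rewrite (xout u huW) huA hc (xout _ hbb) in e1.
move/addIr: e1 => e1.
have hu2 : ~~ ((u + w0)%R <= W)%MS.
  by apply/negP => h; move/negP: huW; apply; apply: (addl h).
have e2 := hf (u + w0); rewrite (xout _ hu2) mulmxDl huA hc xout in e2; last first.
  apply/negP => h; move/negP: hbb; apply; apply: (addl (b := w0 *m A)).
    by rewrite addrAC.
  exact: s4.
rewrite mulmxDl -e1 hwB addrAC [RHS]addrAC in e2.
move/addrI: e2 => e2.
have : w0 *m A = 0 by apply: half0 => //; rewrite mulr2n {1}e2 addNr.
move/(congr1 (mulmx^~ (invmx A))); rewrite /= mulmxK // mul0mx => e.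
by rewrite e eqxx in nw0.
Qed.

Lemma two_neq0 (p : nat) : prime p -> (3 <= p)%N -> (2%:R != 0 :> 'F_p).
Proof.
move=> pp p3; rewrite -(dvdn_pcharf (pchar_Fp pp)).
by apply/negP => /(dvdn_leq (isT : (0 < 2)%N)); rewrite leqNgt (leq_trans _ p3).
Qed.

Lemma exists_out (F : finFieldType) (d : nat) (W : 'M[F]_d) :
  (\rank W < d)%N -> exists u : 'rV_d, ~~ (u <= W)%MS.
Proof.
move=> hr; case: (pickP (fun u : 'rV_d => ~~ (u <= W)%MS)) => [u hu|h].
  by exists u.
have : (1%:M <= W)%MS.
  by apply/row_subP => i; move: (h (row i 1%:M)) => /= /negbFE.
by move/mxrankS; rewrite mxrank1 leqNgt hr.
Qed.

Lemma exists_in (F : fieldType) (d : nat) (W : 'M[F]_d) :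
  (0 < \rank W)%N -> exists2 w : 'rV_d, (w <= W)%MS & w != 0.
Proof.
move=> hr; case: (pickP (fun i => row i W != 0)) => [i hi|h].
  by exists (row i W); rewrite ?row_sub.
suff W0 : W = 0 by move: hr; rewrite W0 mxrank0.
apply/row_matrixP => i; rewrite row0; move: (h i) => /= /negbFE /eqP //.
Qed.

Theorem lemma3p3 (p d : nat) (W : 'M['F_p]_d) :
  prime p -> (3 <= p)%N -> (2 <= d)%N ->
  (0 < \rank W)%N -> (\rank W < d)%N ->
  exists x : {perm 'rV['F_p]_d},
    (AGL p d :&: (AGL p d :^ x))%g = GL_stab W.
Proof.
move=> pp p3 d2 r0 rd.
have h2 := two_neq0 pp p3.
pose x := perm (can_inj (xfK W)).
have hx w : x w = xf W w by rewrite permE.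
have hxinv w : (x^-1)%g w = xf W w.
  by apply: (@perm_inj _ x); rewrite permKV hx xfK.
exists x; apply/setP => s.
rewrite in_setI mem_conjg.
have hc v : (s ^ x^-1)%g v = xf W (s (xf W v)).
  by rewrite conjgE invgK !permM hxinv hx.
rewrite /AGL /GL_stab !inE.
apply/idP/idP.
  case/andP => /existsP [A /existsP [b /andP [uA /forallP hA]]].
  move=> /existsP [B /existsP [c /andP [uB /forallP hB]]].
  have hf v : xf W (xf W v *m A + b) = v *m B + c.
    by move/eqP: (hB v); rewrite hc (eqP (hA _)).
  have [b0 s4] := key h2 uA (exists_out rd) (exists_in r0) hf.
  have hs v : s v = v *m A by rewrite (eqP (hA v)) b0 addr0.
  apply/andP; split.
    by apply/existsP; exists A; rewrite uA; apply/forallP => v; rewrite hs.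
  apply/eqP/setP => y; rewrite inE; apply/imsetP/idP.
    by case=> w; rewrite inE hs => hw ->; apply: s4.
  move=> hy; exists (y *m invmx A); last by rewrite hs mulmxKV.
  by rewrite inE; apply: (inv_pres uA s4); rewrite mulmxKV.
case/andP => /existsP [g /andP [ug /forallP hg]] /eqP himg.
have hs v : s v = v *m g by apply/eqP.
have pres (v : 'rV_d) : (v *m g <= W)%MS = (v <= W)%MS.
  apply/idP/idP => h.
    have : s v \in subspace_set W by rewrite inE hs.
    rewrite -himg => /imsetP [w hw /perm_inj ->]; by rewrite inE in hw.
  have : s v \in (fun v => s v) @: subspace_set W by apply: imset_f; rewrite inE.
  by rewrite himg inE hs.
apply/andP; split; apply/existsP; exists g; apply/existsP; exists 0;
  rewrite ug /=; apply/forallP => v; rewrite addr0.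
  by rewrite hs.
rewrite hc /xf; case hv: (v <= W)%MS.
  by rewrite hs mulNmx subN pres hv opprK.
by rewrite hs pres hv.
Qed.
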